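(* Let $d$ be a positive integer and let $A\in\mathbb{R}^{[3]\times[n]}$ be a matrix that cannot be eliminated at any column. Then there exists $b\in\mathbb{R}^{[3]}$ such that the solution graph $G(R(A,b))$ is not connected.
   Context: Fix a positive integer $d$ and let $D=\{0,1,\dots,d\}$; $[n]=\{1,\dots,n\}$. For $A\in\mathbb{R}^{[m]\times[n]}$ and $b\in\mathbb{R}^{[m]}$, $R(A,b)=\{x\in D^{[n]} : Ax\ge b\}$. For $R\subseteq D^{[n]}$, the solution graph $G(R)$ is the undirected graph with vertex set $R$ in which $x,y$ are adjacent iff they differ in exactly one coordinate. A matrix $A=(a_{ij})\in\mathbb{R}^{[m]\times[n]}$ can be eliminated at column $j\in[n]$ if (i) for every row $i$ with $a_{ij}>0$ we have $a_{ij'}=0$ for all $j'\in[n]\setminus\{j\}$, or (ii) for every row $i$ with $a_{ij}<0$ we have $a_{ij'}=0$ for all $j'\in[n]\setminus\{j\}$. *)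

(* Defs.v *)
From HB Require Import structures.
From mathcomp Require Import all_boot all_order all_algebra.
From mathcomp Require Import reals.
Set Implicit Arguments. Unset Strict Implicit. Unset Printing Implicit Defensive.
Import Order.TTheory GRing.Theory Num.Theory.
Local Open Scope ring_scope.

Definition point (d n : nat) := {ffun 'I_n -> 'I_d.+1}.

Definition solset (R : realType) (d m n : nat) (A : 'M[R]_(m, n)) (b : 'cV[R]_m)
  : {set point d n} :=
  [set x : point d n | [forall i : 'I_m,
     b i 0 <= \sum_(j < n) A i j * ((x j : nat)%:R)]].

Definition adjacent (d n : nat) (x y : point d n) : bool :=
  #|[set j : 'I_n | x j != y j]| == 1%N.

Definition solgraph_rel (d n : nat) (S : {set point d n}) : rel (point d n) :=
  fun x y => [&& x \in S, y \in S & adjacent x y].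

Definition graph_connected (d n : nat) (S : {set point d n}) : Prop :=
  forall x y, x \in S -> y \in S -> connect (solgraph_rel S) x y.

Definition eliminable (R : realType) (m n : nat) (A : 'M[R]_(m, n)) (j : 'I_n) : Prop :=
  (forall i : 'I_m, 0 < A i j -> forall j' : 'I_n, j' != j -> A i j' = 0) \/
  (forall i : 'I_m, A i j < 0 -> forall j' : 'I_n, j' != j -> A i j' = 0).

(* Main.v *)
Require Import Defs.
From HB Require Import structures.
From mathcomp Require Import all_boot all_order all_algebra.
From mathcomp Require Import reals.
From mathcomp Require Import lra.
Import Order.TTheory GRing.Theory Num.Theory.
Local Open Scope ring_scope.

Definition Ax (R : realType) d n (A : 'M[R]_(3, n)) (x : point d n) (i : 'I_3) : R :=
  \sum_(j < n) A i j * ((x j : nat)%:R).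
Arguments Ax {R d n}.

Lemma core (R : realType) d n (A : 'M[R]_(3, n)) (x y : point d n) :
  x != y ->
  (forall x', adjacent x x' -> exists i, Ax A x' i < Num.min (Ax A x i) (Ax A y i)) ->
  exists b, ~ graph_connected (solset d A b).
Proof.
move=> Hneq H.
exists (\col_i Num.min (Ax A x i) (Ax A y i)) => Hc.
have xS : x \in solset d A (\col_i Num.min (Ax A x i) (Ax A y i)).
  by rewrite inE; apply/forallP => i; rewrite mxE ge_min lexx.
have yS : y \in solset d A (\col_i Num.min (Ax A x i) (Ax A y i)).
  by rewrite inE; apply/forallP => i; rewrite mxE ge_min lexx orbT.
move: (Hc x y xS yS) => /connectP [p Hp Hl].
case: p Hp Hl => [|x' p] /=.
  by move=> _ Hxy; rewrite Hxy eqxx in Hneq.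
move=> /andP [Hr _] _.
case/and3P: Hr => _ Hx'S Hadj.
have [i Hi] := H x' Hadj.
move: Hx'S; rewrite inE => /forallP /(_ i); rewrite mxE.
by rewrite leNgt Hi.
Qed.

Lemma adj_sum (R : realType) d n (A : 'M[R]_(3, n)) (x x' : point d n) :
  adjacent x x' -> exists l, x' l != x l /\
    forall i, Ax A x' i = Ax A x i + A i l * (((x' l : nat)%:R) - ((x l : nat)%:R)).
Proof.
rewrite /adjacent => /cards1P [l Hl].
have Hm : forall j, (x j != x' j) = (j == l).
  by move=> j; rewrite -in_set1 -Hl inE.
exists l; split; first by rewrite eq_sym Hm.
move=> i; rewrite /Ax (bigD1 l) //= [in RHS](bigD1 l) //=.
have -> : \sum_(j < n | j != l) A i j * ((x' j : nat)%:R) =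
          \sum_(j < n | j != l) A i j * ((x j : nat)%:R).
  apply: eq_bigr => j Hj; congr (_ * _); congr (_%:R).
  by move: Hj; rewrite -Hm negbK => /eqP ->.
rewrite mulrBr; lra.
Qed.

Definition rowv (R : realType) n (A : 'M[R]_(3, n)) (e : 'I_n -> R) (i : 'I_3) : R :=
  \sum_(l < n) A i l * e l.
Arguments rowv {R n}.

Lemma corner (R : realType) d n (A : 'M[R]_(3, n)) (hd : (0 < d)%N)
  (e : 'I_n -> R) (up : 'I_n -> bool) :
  (forall l, e l = 0 \/ (e l = 1 /\ up l) \/ (e l = -1 /\ ~~ up l)) ->
  (exists l, e l != 0) ->
  (forall l, exists i, (if up l then A i l else - A i l) < Num.min 0 (rowv A e i)) ->
  exists b, ~ graph_connected (solset d A b).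
Proof.
move=> He [l0 Hl0] Hup.
pose x : point d n := [ffun l => if up l then ord0 else ord_max].
pose y : point d n := [ffun l => if e l == 0 then x l else
                          if up l then inord 1 else inord d.-1].
have Hd1 : (d.-1 < d.+1)%N by rewrite ltnS leq_pred.
have Hdiff : forall l, (((y l : nat)%:R - (x l : nat)%:R) : R) = e l.
  move=> l; rewrite !ffunE.
  case: (He l) => [->|[[-> ->]|[-> /negbTE ->]]]; first by rewrite eqxx subrr.
    rewrite oner_eq0 /= inordK //; lra.
  rewrite eqr_oppLR oppr0 oner_eq0 /= inordK //=.
  by rewrite -{2}(prednK hd) -addn1 natrD; lra.
have Hw : forall i, Ax A y i = Ax A x i + rowv A e i.
  move=> i; rewrite /rowv /Ax -big_split /=.
  by apply: eq_bigr => l _; rewrite -Hdiff; lra.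
apply: (@core R d n A x y).
  apply/negP => /eqP Hxy; move: (Hdiff l0); rewrite Hxy subrr => H0.
  by rewrite -H0 eqxx in Hl0.
move=> x' /(@adj_sum R d n A) [l [Hne Hs]].
have [i Hi] := Hup l.
exists i; rewrite Hs Hw lt_min.
move: Hi; rewrite lt_min => /andP [H1 H2].
have Hv : (0 <= ((x' l : nat)%:R : R)) /\ (((x' l : nat)%:R : R) <= d%:R).
  by split; rewrite ?ler0n // ler_nat -ltnS.
move: Hne; rewrite /x ffunE; case: (up l) H1 H2 => H1 H2 Hne.
  have Hv1 : (1 <= ((x' l : nat)%:R : R)).
    by rewrite ler1n lt0n; apply: contra Hne => /eqP H; apply/eqP/val_inj.
  rewrite /= subr0; apply/andP; split; nra.
have Hv1 : (((x' l : nat)%:R : R) <= d%:R - 1).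
  have : ((x' l : nat) < d)%N.
    rewrite ltn_neqAle -ltnS ltn_ord andbT; apply: contra Hne => /eqP H.
    by apply/eqP/val_inj.
  rewrite -(ler_nat R) -addn1 natrD; lra.
rewrite /= ; apply/andP; split; nra.
Qed.

Lemma pig3 (a b c e : 'I_3) : a != b -> c != e -> [|| a == c, a == e, b == c | b == e].
Proof.
by case: a b c e => [[|[|[|?]]] ?] [[|[|[|?]]] ?] [[|[|[|?]]] ?] [[|[|[|?]]] ?].
Qed.

Lemma third3 (p q : 'I_3) : p != q -> exists r : 'I_3, [/\ r != p, r != q &
   forall i : 'I_3, [|| i == p, i == q | i == r]].
Proof.
pose i0 : 'I_3 := @Ordinal 3 0 isT.
pose i1 : 'I_3 := @Ordinal 3 1 isT.
pose i2 : 'I_3 := @Ordinal 3 2 isT.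
case: p q => [[|[|[|?]]] ?] [[|[|[|?]]] ?] // _;
  first [ exists i0; split => // -[[|[|[|?]]] ?] //
        | exists i1; split => // -[[|[|[|?]]] ?] //
        | exists i2; split => // -[[|[|[|?]]] ?] // ].
Qed.

Lemma two_rows (R : realType) (w : 'I_3 -> R) :
  (exists r1 r2, [/\ r1 != r2, 0 <= w r1 & 0 <= w r2]) \/
  (exists r1 r2, [/\ r1 != r2, 0 <= - w r1 & 0 <= - w r2]).
Proof.
pose i0 : 'I_3 := @Ordinal 3 0 isT.
pose i1 : 'I_3 := @Ordinal 3 1 isT.
pose i2 : 'I_3 := @Ordinal 3 2 isT.
have n01 : i0 != i1 by []. have n02 : i0 != i2 by []. have n12 : i1 != i2 by [].
case: (lerP 0 (w i0)) => h0; case: (lerP 0 (w i1)) => h1; case: (lerP 0 (w i2)) => h2.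
all: first [ by left; exists i0, i1; split
           | by left; exists i0, i2; split
           | by left; exists i1, i2; split
           | by right; exists i0, i1; split => //; lra
           | by right; exists i0, i2; split => //; lra
           | by right; exists i1, i2; split => //; lra ].
Qed.

Definition Tcond (R : realType) n (A : 'M[R]_(3, n)) (e : 'I_n -> R) :=
  forall l, e l != 0 -> exists i, e l * A i l < 0 /\ 0 < rowv A e i - e l * A i l.
Arguments Tcond {R n}.

Lemma M0 (R : realType) d n (A : 'M[R]_(3, n)) (hd : (0 < d)%N)
  (hmix : forall l, (exists i, 0 < A i l) /\ (exists i, A i l < 0))
  (e : 'I_n -> R) :
  (forall l, e l = 0 \/ e l = 1 \/ e l = -1) -> (exists l, e l != 0) ->
  Tcond A e ->
  (exists r1 r2, [/\ r1 != r2, 0 <= rowv A e r1 & 0 <= rowv A e r2]) ->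
  exists b, ~ graph_connected (solset d A b).
Proof.
move=> He Hnz HT [r1 [r2 [Hr12 Hw1 Hw2]]].
have : forall l, exists bb : bool,
   (e l = 0 \/ (e l = 1 /\ bb) \/ (e l = -1 /\ ~~ bb)) /\
   exists i, (if bb then A i l else - A i l) < Num.min 0 (rowv A e i).
  move=> l; case: (He l) => [H0|[H1|H1]].
  - have [[p Hp] [q Hq]] := hmix l.
    have Hpq : p != q by apply/negP => /eqP E; rewrite E in Hp; lra.
    have Hsel : exists i, 0 <= rowv A e i /\ A i l != 0.
      case/or4P: (@pig3 r1 r2 p q Hr12 Hpq) => /eqP E.
      + by exists r1; split => //; rewrite E; lra.
      + by exists r1; split => //; rewrite E; lra.
      + by exists r2; split => //; rewrite E; lra.
      + by exists r2; split => //; rewrite E; lra.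
    case: Hsel => i [Hwi Hai].
    exists (A i l < 0); split; first by left.
    exists i; have -> : Num.min 0 (rowv A e i) = 0 by apply/min_idPl.
    move: Hai; rewrite neq_lt => /orP [h|h]; first by rewrite h.
    have -> : (A i l < 0) = false by apply/negbTE; rewrite -leNgt ltW.
    lra.
  - exists true; split; first by right; left.
    have Hl : e l != 0 by rewrite H1 oner_eq0.
    have [i [Hi1 Hi2]] := HT l Hl.
    move: Hi1 Hi2; rewrite H1 mul1r => Hi1 Hi2.
    by exists i; rewrite lt_min; apply/andP; split => //; lra.
  - exists false; split; first by right; right.
    have Hl : e l != 0 by rewrite H1 oppr_eq0 oner_eq0.
    have [i [Hi1 Hi2]] := HT l Hl.
    move: Hi1 Hi2; rewrite H1 mulN1r => Hi1 Hi2.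
    by exists i; rewrite lt_min; apply/andP; split => //; lra.
move=> /fin_all_exists [up Hup].
apply: (@corner R d n A hd e up).
- by move=> l; case: (Hup l) => H _.
- exact: Hnz.
- by move=> l; case: (Hup l) => _.
Qed.

Lemma M1 (R : realType) d n (A : 'M[R]_(3, n)) (hd : (0 < d)%N)
  (hmix : forall l, (exists i, 0 < A i l) /\ (exists i, A i l < 0))
  (e : 'I_n -> R) :
  (forall l, e l = 0 \/ e l = 1 \/ e l = -1) -> (exists l, e l != 0) ->
  Tcond A e -> Tcond A (fun l => - e l) ->
  exists b, ~ graph_connected (solset d A b).
Proof.
move=> He Hnz HT HTn.
case: (@two_rows R (rowv A e)) => H; first exact: (@M0 R d n A hd hmix e).
apply: (@M0 R d n A hd hmix (fun l => - e l)) => //.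
- by move=> l; case: (He l) => [->|[->|->]]; rewrite ?oppr0 ?opprK; auto.
- by case: Hnz => l Hl; exists l; rewrite oppr_eq0.
- have Hr : forall i, rowv A (fun l => - e l) i = - rowv A e i.
    by move=> i; rewrite /rowv -sumrN; apply: eq_bigr => l _; rewrite mulrN.
  by case: H => r1 [r2 [H1 H2 H3]]; exists r1, r2; rewrite !Hr.
Qed.

Lemma sgn_ex (R : realType) (x : R) : x != 0 ->
  exists a : R, (a = 1 \/ a = -1) /\ 0 < a * x.
Proof.
rewrite neq_lt => /orP [h|h].
  by exists (-1); split; [right|]; lra.
by exists 1; split; [left|]; lra.
Qed.

Lemma pairL (R : realType) d n (A : 'M[R]_(3, n)) (hd : (0 < d)%N)
  (hmix : forall l, (exists i, 0 < A i l) /\ (exists i, A i l < 0))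
  (j k : 'I_n) (i1 i2 : 'I_3) :
  j != k -> A i1 j * A i2 j < 0 -> A i1 k * A i2 k < 0 ->
  exists b, ~ graph_connected (solset d A b).
Proof.
move=> Hjk Hj Hk.
have Hj0 : A i2 j != 0 by apply/negP => /eqP E; rewrite E mulr0 in Hj; lra.
have Hk0 : A i1 k != 0 by apply/negP => /eqP E; rewrite E mul0r in Hk; lra.
have [a [Ha Ha2]] := @sgn_ex R _ Hj0.
have [b [Hb Hb1]] := @sgn_ex R _ Hk0.
have Ha1 : a * A i1 j < 0.
  by move: Ha2; case: Ha => ->; rewrite ?mul1r ?mulN1r => Ha2; nra.
have Hb2 : b * A i2 k < 0.
  by move: Hb1; case: Hb => ->; rewrite ?mul1r ?mulN1r => Hb1; nra.
pose e := fun l : 'I_n => if l == j then a else if l == k then b else 0.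
have Hkj : k != j by rewrite eq_sym.
have Hej : e j = a by rewrite /e eqxx.
have Hek : e k = b by rewrite /e (negbTE Hkj) eqxx.
have Hrow : forall i, rowv A e i = a * A i j + b * A i k.
  move=> i; rewrite /rowv (bigD1 j) //= (bigD1 k) //= big1 ?addr0.
    by rewrite Hej Hek mulrC [b * _]mulrC.
  by move=> l /andP [Hl1 Hl2]; rewrite /e (negbTE Hl1) (negbTE Hl2) mulr0.
have Hsup : forall l, e l != 0 -> l = j \/ l = k.
  move=> l; case: (eqVneq l j) => [->|Hlj]; first by left.
  case: (eqVneq l k) => [->|Hlk]; first by right.
  by rewrite /e (negbTE Hlj) (negbTE Hlk) eqxx.
have Hrown : forall i, rowv A (fun l => - e l) i = - (a * A i j + b * A i k).
  by move=> i; rewrite -Hrow /rowv -sumrN; apply: eq_bigr => l _; rewrite mulrN.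
apply: (@M1 R d n A hd hmix e).
- move=> l; rewrite /e; case: (l == j); first by case: Ha; auto.
  by case: (l == k); [case: Hb; auto | left].
- by exists j; rewrite Hej; case: Ha => ->; rewrite ?oppr_eq0 oner_eq0.
- move=> l /Hsup [->|->].
    by exists i1; rewrite Hrow Hej; split; lra.
  by exists i2; rewrite Hrow Hek; split; lra.
- move=> l; rewrite oppr_eq0 => /Hsup [->|->].
    by exists i2; rewrite Hrown Hej; split; lra.
  by exists i1; rewrite Hrown Hek; split; lra.
Qed.

Lemma tripL (R : realType) d n (A : 'M[R]_(3, n)) (hd : (0 < d)%N)
  (hmix : forall l, (exists i, 0 < A i l) /\ (exists i, A i l < 0))
  (j k k' : 'I_n) (p q r : 'I_3) :
  j != k -> j != k' -> k != k' ->
  0 < A p j -> A q j < 0 -> A r j = 0 ->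
  A q k = 0 -> A p k * A r k < 0 ->
  A p k' = 0 -> A q k' * A r k' < 0 ->
  exists b, ~ graph_connected (solset d A b).
Proof.
move=> Hjk Hjk' Hkk' Hpj Hqj Hrj Hqk Hk Hpk' Hk'.
have Hk0 : A r k != 0 by apply/negP => /eqP E; rewrite E mulr0 in Hk; lra.
have Hk'0 : A q k' != 0 by apply/negP => /eqP E; rewrite E mul0r in Hk'; lra.
have [b [Hb Hb1]] := @sgn_ex R _ Hk0.
have [c [Hc Hc1]] := @sgn_ex R _ Hk'0.
have Hb2 : b * A p k < 0.
  by move: Hb1; case: Hb => ->; rewrite ?mul1r ?mulN1r => Hb1; nra.
have Hc2 : c * A r k' < 0.
  by move: Hc1; case: Hc => ->; rewrite ?mul1r ?mulN1r => Hc1; nra.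
pose e := fun l : 'I_n => if l == j then 1 else if l == k then b
                          else if l == k' then c else 0.
have Hkj : k != j by rewrite eq_sym.
have Hk'j : k' != j by rewrite eq_sym.
have Hk'k : k' != k by rewrite eq_sym.
have Hej : e j = 1 by rewrite /e eqxx.
have Hek : e k = b by rewrite /e (negbTE Hkj) eqxx.
have Hek' : e k' = c by rewrite /e (negbTE Hk'j) (negbTE Hk'k) eqxx.
have Hrow : forall i, rowv A e i = A i j + b * A i k + c * A i k'.
  move=> i; rewrite /rowv (bigD1 j) //= (bigD1 k) //= (bigD1 k') /=; last first.
    by rewrite Hk'j Hk'k.
  rewrite big1 ?addr0.
    by rewrite Hej Hek Hek' mulr1 [b * _]mulrC [c * _]mulrC addrA.
  move=> l /andP [/andP [Hl1 Hl2] Hl3].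
  by rewrite /e (negbTE Hl1) (negbTE Hl2) (negbTE Hl3) mulr0.
have Hsup : forall l, e l != 0 -> [\/ l = j, l = k | l = k'].
  move=> l; case: (eqVneq l j) => [->|Hlj]; first by constructor 1.
  case: (eqVneq l k) => [->|Hlk]; first by constructor 2.
  case: (eqVneq l k') => [->|Hlk']; first by constructor 3.
  by rewrite /e (negbTE Hlj) (negbTE Hlk) (negbTE Hlk') eqxx.
have Hrown : forall i, rowv A (fun l => - e l) i = - (A i j + b * A i k + c * A i k').
  by move=> i; rewrite -Hrow /rowv -sumrN; apply: eq_bigr => l _; rewrite mulrN.
apply: (@M1 R d n A hd hmix e).
- move=> l; rewrite /e; case: (l == j); first by auto.
  case: (l == k); first by case: Hb; auto.
  by case: (l == k'); [case: Hc; auto | left].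
- by exists j; rewrite Hej oner_eq0.
- move=> l /Hsup [->|->|->].
  + by exists q; rewrite Hrow Hej Hqk; split; lra.
  + by exists p; rewrite Hrow Hek Hpk'; split; lra.
  + by exists r; rewrite Hrow Hek' Hrj; split; lra.
- move=> l; rewrite oppr_eq0 => /Hsup [->|->|->].
  + by exists p; rewrite Hrown Hej Hpk'; split; lra.
  + by exists r; rewrite Hrown Hek Hrj; split; lra.
  + by exists q; rewrite Hrown Hek' Hqk; split; lra.
Qed.

Lemma notelim (R : realType) n (A : 'M[R]_(3, n)) (l : 'I_n) :
  ~ eliminable A l ->
  (exists i, 0 < A i l /\ exists j', j' != l /\ A i j' != 0) /\
  (exists i, A i l < 0 /\ exists j', j' != l /\ A i j' != 0).
Proof.
move=> hA; split.
  have : ~~ [forall i, (0 < A i l) ==> [forall j', (j' != l) ==> (A i j' == 0)]].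
    apply/negP => /forallP H; apply: hA; left => i Hi j' Hj'; apply/eqP.
    by move: (H i) => /implyP /(_ Hi) /forallP /(_ j') /implyP /(_ Hj').
  rewrite negb_forall => /existsP [i]; rewrite negb_imply => /andP [Hi].
  rewrite negb_forall => /existsP [j']; rewrite negb_imply => /andP [Hj' Hz].
  by exists i; split => //; exists j'.
have : ~~ [forall i, (A i l < 0) ==> [forall j', (j' != l) ==> (A i j' == 0)]].
  apply/negP => /forallP H; apply: hA; right => i Hi j' Hj'; apply/eqP.
  by move: (H i) => /implyP /(_ Hi) /forallP /(_ j') /implyP /(_ Hj').
rewrite negb_forall => /existsP [i]; rewrite negb_imply => /andP [Hi].
rewrite negb_forall => /existsP [j']; rewrite negb_imply => /andP [Hj' Hz].
by exists i; split => //; exists j'.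
Qed.

Lemma L1 (R : realType) (c : 'I_3 -> R) (p q r : 'I_3) :
  (forall i, [|| i == p, i == q | i == r]) -> c p != 0 ->
  (exists a, 0 < c a) -> (exists b, c b < 0) ->
  ~~ (c p * c q < 0) -> c p * c r < 0.
Proof.
move=> Hcov Hp [a Ha] [b Hb]; rewrite -leNgt => Hpq.
move: Hp; rewrite neq_lt => /orP [h|h].
  case/or3P: (Hcov a) => /eqP E; rewrite E in Ha; nra.
case/or3P: (Hcov b) => /eqP E; rewrite E in Hb; nra.
Qed.

Lemma L2 (R : realType) (x y z : R) :
  x * y < 0 -> ~~ (x * z < 0) -> ~~ (y * z < 0) -> z = 0.
Proof.
rewrite -!leNgt => H1 H2 H3.
case: (ltrgtP z 0) => // h.
  have hx : x <= 0 by rewrite leNgt; apply/negP => hx; nra.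
  have hy : y <= 0 by rewrite leNgt; apply/negP => hy; nra.
  nra.
have hx : 0 <= x by rewrite leNgt; apply/negP => hx; nra.
have hy : 0 <= y by rewrite leNgt; apply/negP => hy; nra.
nra.
Qed.

Theorem lemma6 (R : realType) (d n : nat) (hd : (0 < d)%N) (hn : (0 < n)%N)
  (A : 'M[R]_(3, n)) (hA : forall j : 'I_n, ~ eliminable A j) :
  exists b : 'cV[R]_3, ~ graph_connected (solset d A b).
Proof.
have hmix : forall l, (exists i, 0 < A i l) /\ (exists i, A i l < 0).
  move=> l; have [[i [Hi _]] [i' [Hi' _]]] := @notelim R n A l (hA l).
  by split; [exists i | exists i'].
pose j : 'I_n := Ordinal hn.
have [[p [Hpj [k [Hkj Hpk]]]] [q [Hqj [k' [Hk'j Hqk']]]]] := @notelim R n A j (hA j).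
have Hpq : p != q by apply/negP => /eqP E; rewrite E in Hpj; lra.
have [r [Hrp Hrq Hcov]] := @third3 p q Hpq.
have Hcov' : forall i, [|| i == q, i == p | i == r].
  by move=> i; case/or3P: (Hcov i) => ->; rewrite ?orbT.
have Hcov'' : forall i, [|| i == r, i == p | i == q].
  by move=> i; case/or3P: (Hcov i) => ->; rewrite ?orbT.
have Hjpq : A p j * A q j < 0 by nra.
have Hjk : j != k by rewrite eq_sym.
have Hjk' : j != k' by rewrite eq_sym.
case: (boolP (A p k * A q k < 0)) => [H|Hnkpq].
  exact: (@pairL R d n A hd hmix j k p q).
have Hkpr : A p k * A r k < 0.
  by case: (hmix k) => Ha Hb; apply: (@L1 R (fun i => A i k) p q r).
case: (boolP (A p k' * A q k' < 0)) => [H|Hnk'pq].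
  exact: (@pairL R d n A hd hmix j k' p q).
have Hk'qr : A q k' * A r k' < 0.
  case: (hmix k') => Ha Hb; apply: (@L1 R (fun i => A i k') q p r) => //.
  by rewrite mulrC.
case: (boolP (A p j * A r j < 0)) => [H|Hnjpr].
  exact: (@pairL R d n A hd hmix j k p r).
case: (boolP (A q j * A r j < 0)) => [H|Hnjqr].
  exact: (@pairL R d n A hd hmix j k' q r).
have Hrj : A r j = 0 by apply: (@L2 R _ _ _ Hjpq).
case: (eqVneq k k') => [Ekk|Hkk'].
  subst k'.
  have [k'' [Hk''k Hrk'']] : exists k'', k'' != k /\ A r k'' != 0.
    have [[p1 [Hp1 [k1 [Hk1 Hz1]]]] [q1 [Hq1 [k2 [Hk2 Hz2]]]]] := @notelim R n A k (hA k).
    have Hk0 : A r k != 0 by apply/negP => /eqP E; rewrite E mulr0 in Hkpr; lra.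
    move: Hk0; rewrite neq_lt => /orP [h|h].
      exists k2; split => //.
      case/or3P: (Hcov q1) => /eqP E; rewrite E in Hq1 Hz2 => //; nra.
    exists k1; split => //.
    case/or3P: (Hcov p1) => /eqP E; rewrite E in Hp1 Hz1 => //; nra.
  have Hk''j : k != k'' by rewrite eq_sym.
  case: (boolP (A p k'' * A r k'' < 0)) => [H|Hn1].
    exact: (@pairL R d n A hd hmix k k'' p r).
  case: (boolP (A q k'' * A r k'' < 0)) => [H|Hn2].
    exact: (@pairL R d n A hd hmix k k'' q r).
  have : A r k'' * A q k'' < 0.
    case: (hmix k'') => Ha Hb; apply: (@L1 R (fun i => A i k'') r p q) => //.
    by rewrite mulrC.
  by rewrite mulrC (negbTE Hn2).
case: (boolP (A q k * A r k < 0)) => [H|Hn1].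
  exact: (@pairL R d n A hd hmix k k' q r).
case: (boolP (A p k' * A r k' < 0)) => [H|Hn2].
  exact: (@pairL R d n A hd hmix k k' p r).
have Hqk : A q k = 0.
  by apply: (@L2 R _ _ _ Hkpr) => //; rewrite mulrC.
have Hpk'0 : A p k' = 0.
  by apply: (@L2 R _ _ _ Hk'qr); rewrite mulrC.
exact: (@tripL R d n A hd hmix j k k' p q r Hjk Hjk' Hkk' Hpj Hqj Hrj Hqk Hkpr Hpk'0 Hk'qr).
Qed.
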